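(* Let $k\in[n-1]$, $w\in S_n^{k\searrow}$ and $k'\le k$ with $k'\in[n-1]$. If $u\in S_n$ satisfies $u\le_{k'}w$, then $u\in S_n^{k\searrow}$.
   Context: Permutations in one-line notation; for $i<j$, $wt_{i,j}$ is $w$ with positions $i,j$ swapped; $\ell$ is the number of inversions. $u\lessdot w$ iff $w=ut_{i,j}$ for some $i<j$ and $\ell(w)=\ell(u)+1$; $u\lessdot_{k'}w$ iff moreover $i\le k'<j$; $\le_{k'}$ is the $k'$-Bruhat order, the reflexive-transitive closure of $\lessdot_{k'}$. For $k\in\{0,\dots,n-1\}$, $S_n^{k\searrow}=\{v\in S_n: v(k+1)>v(k+2)>\dots>v(n)\}$. *)

(* Defs.v *)
From mathcomp Require Import all_boot all_order all_fingroup.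
Set Implicit Arguments. Unset Strict Implicit. Unset Printing Implicit Defensive.

(* Conventions: a permutation w of {1..n} is modelled as w : 'S_n = {perm 'I_n};
   position p (1-indexed) corresponds to the ordinal p-1, and the value w(p)
   corresponds to (w (p-1)) + 1.  This shift preserves all comparisons. *)

(* w t_{i,j}: w with positions i and j swapped, i.e. p |-> w (t_{i,j} p).
   In mathcomp, (s * t) x = t (s x), so this is tperm i j * w. *)
Definition swap_pos n (w : 'S_n) (i j : 'I_n) : 'S_n := (tperm i j * w)%g.

Definition ell n (w : 'S_n) : nat :=
  #|[set pq : 'I_n * 'I_n | (pq.1 < pq.2) && (w pq.2 < w pq.1)]|.

(* u <._{k'} w  (k' a 1-indexed cut position): w = u t_{i,j} with
   i <= k' < j in 1-indexed positions, i.e. i0 < k' <= j0 for ordinals. *)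
Definition kcover n (k' : nat) (u w : 'S_n) : Prop :=
  exists i j : 'I_n,
    [/\ (i < k')%N, (k' <= j)%N, w = swap_pos u i j & ell w = (ell u).+1].

Inductive kle n (k' : nat) : 'S_n -> 'S_n -> Prop :=
| kle_refl u : kle k' u u
| kle_step u v w : kcover k' u v -> kle k' v w -> kle k' u w.

(* v in S_n^{k\searrow}: v(k+1) > v(k+2) > ... > v(n) (1-indexed positions),
   i.e. v is decreasing on the ordinals k, ..., n-1. *)
Definition desc_after n (k : nat) (v : 'S_n) : Prop :=
  forall p q : 'I_n, (k <= p)%N -> (p < q)%N -> (v q < v p)%N.

(* Main.v *)
Require Import Defs.
From mathcomp Require Import all_boot all_order all_fingroup.
From mathcomp Require Import zify.
Set Implicit Arguments. Unset Strict Implicit. Unset Printing Implicit Defensive.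

Definition inv_set n (x : 'S_n) :=
  [set pq : 'I_n * 'I_n | (pq.1 < pq.2)%N && (x pq.2 < x pq.1)%N].

Definition phi n (i j : 'I_n) (z : 'I_n * 'I_n) :=
  if ((i < z.1 < j)%N || (i < z.2 < j)%N) then z
  else (tperm i j z.1, tperm i j z.2).

Lemma ord_neq n (a b : 'I_n) : a <> b -> (a : nat) <> b.
Proof. by move=> H E; apply: H; apply: val_inj. Qed.

Lemma between_t n (i j c : 'I_n) : (i < j)%N ->
  (i < tperm i j c < j)%N = (i < c < j)%N.
Proof.
move=> ij; case: (tpermP i j c) => [E|E|E1 E2]; subst => //; lia.
Qed.

Lemma phiK n (i j : 'I_n) : (i < j)%N -> involutive (phi i j).
Proof.
move=> ij [a b]; rewrite /phi /=.
case C: ((i < a < j)%N || (i < b < j)%N); first by rewrite /= C.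
by rewrite /= !between_t // C !tpermK.
Qed.

Lemma ell_swap_ge n (x : 'S_n) (i j : 'I_n) (S : {set 'I_n * 'I_n}) :
  (i < j)%N -> (x i < x j)%N ->
  (forall z, z \in S -> z \in inv_set (swap_pos x i j) /\ phi i j z \notin inv_set x) ->
  (ell x + #|S| <= ell (swap_pos x i j))%N.
Proof.
move=> ij xij HS.
set y := swap_pos x i j.
have yE c : y c = x (tperm i j c) by rewrite /y /swap_pos permM.
have Himg : phi i j @: inv_set x \subset inv_set y.
  apply/subsetP => z /imsetP [[a b]]; rewrite inE /= => /andP [ab xab] ->.
  rewrite /phi /= inE; case: ifP => C /=.
    rewrite !yE.
    case: (tpermP i j a) => [Ha|Ha|Ha1 Ha2]; case: (tpermP i j b) => [Hb|Hb|Hb1 Hb2];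
      subst; rewrite ?ab //=; try lia.
  move/negbT: C => C; rewrite !yE !tpermK xab andbT.
  case: (tpermP i j a) => [Ha|Ha|Ha1 Ha2]; case: (tpermP i j b) => [Hb|Hb|Hb1 Hb2];
      subst; try lia; try (move: (ord_neq Ha1) (ord_neq Ha2)); try (move: (ord_neq Hb1) (ord_neq Hb2)); lia.
have Hdisj : [disjoint phi i j @: inv_set x & S].
  rewrite -setI_eq0; apply/eqP/setP => z; rewrite !inE.
  apply/negP => /andP [/imsetP [z' Hz' ->] HzS].
  have [_ H] := HS _ HzS; by rewrite phiK // Hz' in H.
have Hc : #|phi i j @: inv_set x| = ell x.
  by rewrite card_imset //; apply: (can_inj (phiK ij)).
have HsubU : phi i j @: inv_set x :|: S \subset inv_set y.
  rewrite subUset Himg /=; apply/subsetP => z Hz; by case: (HS _ Hz).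
have := subset_leq_card HsubU.
have := leq_card_setU (phi i j @: inv_set x) S.
rewrite Hdisj => -[_ /eqP ->]. by rewrite Hc.
Qed.

Lemma swap_posK n (x : 'S_n) (i j : 'I_n) : swap_pos (swap_pos x i j) i j = x.
Proof. by rewrite /swap_pos mulgA tperm2 mul1g. Qed.

Lemma step n k k' (u v : 'S_n) : (k' <= k)%N -> kcover k' u v ->
  desc_after k v -> desc_after k u.
Proof.
move=> kk [i [j [ik jk vE ellv]]] Hv.
have ij : (i < j)%N by lia.
have uE c : u c = v (tperm i j c) by rewrite vE /swap_pos permM tpermK.
have vE' c : v c = u (tperm i j c) by rewrite vE /swap_pos permM.
have uinj a b : (u a : nat) = u b -> a = b.
  by move=> E; apply: (@perm_inj _ u); apply: val_inj.
have uij : (u i < u j)%N.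
  case: (ltngtP (nat_of_ord (u i)) (nat_of_ord (u j))) => [//|H|/uinj E]; last by move: E ij => ->; rewrite ltnn.
  have H' : (v i < v j)%N by rewrite !vE' tpermL tpermR.
  have := @ell_swap_ge n v i j set0 ij H'.
  have uE2 : swap_pos v i j = u by rewrite vE swap_posK.
  rewrite cards0 addn0 uE2 ellv.
  have Hs : forall z, z \in set0 -> z \in inv_set u /\ phi i j z \notin inv_set v.
    by move=> z; rewrite inE.
  move/(_ Hs); lia.
have nb (p : 'I_n) : (i < p < j)%N -> (u i < u p < u j)%N -> False.
  move=> H1 H2.
  have pi : p != i by apply/eqP => E; move: H1; rewrite E; lia.
  have pj : p != j by apply/eqP => E; move: H1; rewrite E; lia.
  have ijne : i != j by apply/eqP => E; move: ij; rewrite E; lia.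
  have := @ell_swap_ge n u i j [set (i, j); (i, p); (p, j)] ij uij.
  have Hc : #|[set (i, j); (i, p); (p, j)]| = 3.
    rewrite -setUA cardsU1 cards2 !inE !xpair_eqE eqxx /=.
    have jp : (j == p) = false by rewrite eq_sym (negbTE pj).
    have ip : (i == p) = false by rewrite eq_sym (negbTE pi).
    by rewrite jp ip.
  rewrite Hc -vE ellv.
  have ip' : i != p by rewrite eq_sym.
  have jp' : j != p by rewrite eq_sym.
  have Hs : forall z, z \in [set (i, j); (i, p); (p, j)] ->
      z \in inv_set v /\ phi i j z \notin inv_set u.
    move=> z; rewrite !inE => /orP [/orP [/eqP->|/eqP->]|/eqP->];
      rewrite /phi /= !vE' ?tpermL ?tpermR ?(tpermD ip' jp') /=;
      case: ifP => C /=; try move/negbT: C => C; lia.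
  move/(_ Hs); lia.
move=> p q kp pq.
have := Hv p q kp pq; rewrite !vE'.
case: (tpermP i j p) => [Ep|Ep|Ep1 Ep2]; case: (tpermP i j q) => [Eq|Eq|Eq1 Eq2] H;
  subst; try lia.
case: (ltngtP (nat_of_ord (u p)) (nat_of_ord (u j))) => [h|//|/uinj E].
  by exfalso; apply: (nb p); lia.
by case: Ep1.
Qed.

Theorem lemma3p7 (n k k' : nat) (w u : 'S_n) :
  (1 <= k)%N -> (k <= n - 1)%N ->
  (1 <= k')%N -> (k' <= n - 1)%N -> (k' <= k)%N ->
  desc_after k w -> kle k' u w -> desc_after k u.
Proof.
move=> _ _ _ _ kk Hw Hle.
elim: Hle Hw => // u0 v w0 Hc _ IH Hw.
exact: (step kk Hc (IH Hw)).
Qed.
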